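(* Let $\Gamma$ be a two-stack automaton and let $\gamma=\gamma_1\cdots\gamma_n$ be a path in $\Gamma$. Then $\gamma$ is balanced if and only if there exists an involution $\pi_\gamma\in S_n$ such that: (1) $\rho(\gamma_i)=\varepsilon$ for all $i$ with $\pi_\gamma(i)=i$; (2) $\rho(\gamma_i)\in X\cup Y$ and $\rho(\gamma_{\pi_\gamma(i)})=\rho(\gamma_i)^{-1}$ for all $i$ with $\pi_\gamma(i)>i$; (3) there are no $i,j$ with $\rho(\gamma_i)\sim\rho(\gamma_j)$ and $i<j<\pi_\gamma(i)<\pi_\gamma(j)$. Moreover, for each balanced $\gamma$ such an involution $\pi_\gamma$ is unique.
   Context: Let $X=\{x_i: i\in\mathbb Z\}$, $X^{-1}=\{x_i^{-1}: i\in\mathbb Z\}$, and similarly $Y=\{y_i\}$, $Y^{-1}=\{y_i^{-1}\}$ be formal labels, and $\varepsilon$ a further label. Write $w_1\sim w_2$ if $w_1,w_2\in X\cup X^{-1}$ or $w_1,w_2\in Y\cup Y^{-1}$. A two-stack automaton is a finite directed graph $\Gamma$ with vertices $v_1,\dots,v_m$, each vertex $v$ labelled by $\rho(v)\in X\cup X^{-1}\cup Y\cup Y^{-1}\cup\{\varepsilon\}$, such that $\rho(v_1)=\rho(v_2)=\varepsilon$ and there is no edge $v_i\to v_j$ with $\rho(v_i)\sim\rho(v_j)$. A path $\gamma=\gamma_1\cdots\gamma_n$ is a sequence of vertices with $\gamma_t\to\gamma_{t+1}$ edges; its length is $n$ (the number of vertices). Traversing $\gamma$, keep two words $w_X\in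 X^*$, $w_Y\in Y^*$, initially empty; on entering a vertex with label $x_i$ append $x_i$ to $w_X$, with label $x_i^{-1}$ remove $x_i$ from the end of $w_X$ (similarly for $y_i$, $y_i^{-1}$ and $w_Y$), and with label $\varepsilon$ do nothing. The path is balanced if every step of this process is well defined (each removal removes the indicated letter from the end of the corresponding word) and both words are empty at the end. *)

(* Defs.v *)
From HB Require Import structures.
From mathcomp Require Import all_boot all_order all_algebra all_fingroup.
Set Implicit Arguments. Unset Strict Implicit. Unset Printing Implicit Defensive.

Inductive label : Type :=
  | LX of int | LXinv of int | LY of int | LYinv of int | Eps.

Definition label_eqb (a b : label) : bool :=
  match a, b with
  | LX i, LX j | LXinv i, LXinv j | LY i, LY j | LYinv i, LYinv j => i == j
  | Eps, Eps => true
  | _, _ => false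
  end.

Lemma label_eqP : Equality.axiom label_eqb.
Proof.
by case=> [i|i|i|i|] [j|j|j|j|] /=; try (by constructor);
  apply: (iffP eqP) => [->|[]].
Qed.

HB.instance Definition _ := hasDecEq.Build label label_eqP.

Definition isXlab (a : label) : bool :=
  match a with LX _ | LXinv _ => true | _ => false end.
Definition isYlab (a : label) : bool :=
  match a with LY _ | LYinv _ => true | _ => false end.
Definition sim (a b : label) : bool :=
  (isXlab a && isXlab b) || (isYlab a && isYlab b).

Definition positive_lab (a : label) : bool :=
  match a with LX _ | LY _ => true | _ => false end.

Definition lab_inv (a : label) : label :=
  match a with
  | LX i => LXinv i | LXinv i => LX i
  | LY i => LYinv i | LYinv i => LY i
  | Eps => Eps
  end.

(* Two-stack automaton on vertices 'I_m (v_1, v_2 are the ordinals 0, 1). *)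
Definition two_stack_automaton (m : nat) (edge : rel 'I_m)
    (rho : 'I_m -> label) : Prop :=
  [/\ 1 < m,
      (forall v : 'I_m, v < 2 -> rho v = Eps) &
      (forall u v : 'I_m, edge u v -> ~~ sim (rho u) (rho v))].

Definition is_path (m : nat) (edge : rel 'I_m) (n : nat)
    (gamma : 'I_n -> 'I_m) : Prop :=
  forall (t : 'I_n) (ht : t.+1 < n), edge (gamma t) (gamma (Ordinal ht)).

(* The two words w_X, w_Y, as sequences of indices (words read left to right,
   the end of the word is the last element). *)
Definition pop (w : seq int) (i : int) : option (seq int) :=
  if (w != [::]) && (last 0%R w == i) then Some (take (size w).-1 w) else None.

Definition step (ws : seq int * seq int) (a : label)
    : option (seq int * seq int) :=
  match a with
  | LX i => Some (rcons ws.1 i, ws.2)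
  | LXinv i => omap (fun w => (w, ws.2)) (pop ws.1 i)
  | LY i => Some (ws.1, rcons ws.2 i)
  | LYinv i => omap (fun w => (ws.1, w)) (pop ws.2 i)
  | Eps => Some ws
  end.

Definition run (s : seq label) : option (seq int * seq int) :=
  foldl (fun o a => obind (fun ws => step ws a) o) (Some ([::], [::])) s.

Definition balanced (m n : nat) (rho : 'I_m -> label) (gamma : 'I_n -> 'I_m)
    : bool :=
  run [seq rho (gamma t) | t <- enum 'I_n] == Some ([::], [::]).

Definition good_involution (m n : nat) (rho : 'I_m -> label)
    (gamma : 'I_n -> 'I_m) (pi : {perm 'I_n}) : Prop :=
  [/\ (forall i : 'I_n, pi (pi i) = i),
      (forall i : 'I_n, pi i = i -> rho (gamma i) = Eps),
      (forall i : 'I_n, i < pi i -> positive_lab (rho (gamma i)) /\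
                 rho (gamma (pi i)) = lab_inv (rho (gamma i))) &
      (~ exists i j : 'I_n, sim (rho (gamma i)) (rho (gamma j)) /\
                  [/\ i < j, j < pi i & pi i < pi j])].

(* Main.v *)
Require Import Defs.
From mathcomp Require Import all_boot all_order all_algebra all_fingroup.
Set Implicit Arguments. Unset Strict Implicit. Unset Printing Implicit Defensive.

Definition isK (c : bool) a := if c then isXlab a else isYlab a.
Definition opener c a := isK c a && positive_lab a.
Definition closer c a := isK c a && ~~ positive_lab a.
Definition idx (a : label) : int :=
  match a with LX i | LXinv i | LY i | LYinv i => i | Eps => 0%R end.

Definition upd c (st : seq nat) (k : nat) (a : label) :=
  if opener c a then rcons st k
  else if closer c a then take (size st).-1 st else st.

Fixpoint canon c (s : seq label) k := match k with
  | 0 => [::] | k'.+1 => upd c (canon c s k') k' (nth Eps s k') end.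

Definition goodp (s : seq label) (p : nat -> nat) :=
  [/\ forall i, i < size s -> p i < size s,
      forall i, i < size s -> p (p i) = i,
      forall i, i < size s -> p i = i -> nth Eps s i = Eps,
      forall i, i < size s -> i < p i -> positive_lab (nth Eps s i) /\
          nth Eps s (p i) = lab_inv (nth Eps s i) &
      forall i j, i < size s -> j < size s -> sim (nth Eps s i) (nth Eps s j) ->
          i < j -> j < p i -> p i < p j -> False].

Lemma lab_invK a : lab_inv (lab_inv a) = a. Proof. by case: a. Qed.
Lemma opener_closer c a : opener c a -> ~~ closer c a.
Proof. by rewrite /opener /closer; case: (isK c a); case: (positive_lab a). Qed.

Lemma good_eps s p i : goodp s p -> i < size s -> nth Eps s i = Eps -> p i = i.
Proof.
case=> H1 H2 H3 H4 H5 hi he.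
case: (ltngtP i (p i)) => // h.
- by have [] := H4 i hi h; rewrite he.
- have hp := H1 i hi.
  have H2' : forall i, i < size s -> p i < i -> p i < p (p i) by move=> x hx hh; rewrite H2.
  have [] := H4 (p i) hp (H2' i hi h).
  by rewrite H2 // he; case: (nth Eps s (p i)).
Qed.

Lemma good_pos s p i : goodp s p -> i < size s -> positive_lab (nth Eps s i) -> i < p i.
Proof.
move=> G; case: (G) => H1 H2 H3 H4 H5 hi hpos.
case: (ltngtP i (p i)) => // h.
- have hp := H1 i hi.
  have H2' : forall i, i < size s -> p i < i -> p i < p (p i) by move=> x hx hh; rewrite H2.
  have [P] := H4 (p i) hp (H2' i hi h); rewrite H2 // => E.
  by move: hpos P; rewrite E; case: (nth Eps s (p i)).
- by move: hpos; rewrite (H3 i hi (esym h)).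
Qed.

Lemma good_neg s p i : goodp s p -> i < size s -> nth Eps s i != Eps ->
  ~~ positive_lab (nth Eps s i) ->
  [/\ p i < i, positive_lab (nth Eps s (p i)) & nth Eps s (p i) = lab_inv (nth Eps s i)].
Proof.
move=> G; case: (G) => H1 H2 H3 H4 H5 hi hne hneg.
case: (ltngtP i (p i)) => h.
- by have [] := H4 i hi h; rewrite (negbTE hneg).
- have hp := H1 i hi.
  have H2' : forall i, i < size s -> p i < i -> p i < p (p i) by move=> x hx hh; rewrite H2.
  have [P] := H4 (p i) hp (H2' i hi h); rewrite H2 // => E.
  by split => //; rewrite E lab_invK.
- by move: hne; rewrite (H3 i hi (esym h)).
Qed.

Definition opn c s (p : nat -> nat) k :=
  [seq i <- iota 0 k | opener c (nth Eps s i) && (k <= p i)].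

Lemma opn_notcloser c s p k : goodp s p -> k < size s ->
  ~~ closer c (nth Eps s k) ->
  opn c s p k.+1 = if opener c (nth Eps s k) then rcons (opn c s p k) k
                   else opn c s p k.
Proof.
move=> G hk hc; case: (G) => H1 H2 H3 H4 H5.
rewrite /opn -addn1 iotaD add0n filter_cat /=.
have -> : [seq i <- iota 0 k | opener c (nth Eps s i) && (k + 1 <= p i)] =
          [seq i <- iota 0 k | opener c (nth Eps s i) && (k <= p i)].
  apply: eq_in_filter => i; rewrite mem_iota add0n /= => hik.
  case ho: (opener c (nth Eps s i)) => //=.
  rewrite addn1 [k <= p i]leq_eqVlt.
  case: eqP => //= E.
  have his : i < size s by apply: ltn_trans hk.
  have hpos : positive_lab (nth Eps s i) by move: ho; rewrite /opener => /andP[].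
  have := good_pos G his hpos => hlt.
  have [_ E2] := H4 i his hlt.
  move: hc; rewrite E E2; move: ho.
  by rewrite /opener /closer; case: (nth Eps s i); case: c.
case ho: (opener c (nth Eps s k)) => /=.
- have hpos : positive_lab (nth Eps s k) by move: ho; rewrite /opener => /andP[].
  by rewrite addn1 (good_pos G hk hpos) cats1.
- by rewrite cats0.
Qed.
Lemma closer_ne c a : closer c a -> a != Eps /\ ~~ positive_lab a.
Proof. by rewrite /closer; case: a; case: c. Qed.

Lemma closer_opener c a : closer c a -> ~~ opener c a.
Proof. by rewrite /opener /closer; case: (isK c a); case: (positive_lab a). Qed.

Lemma sim_open c a b : opener c a -> opener c b -> sim a b.
Proof. by rewrite /opener /sim; case: a; case: b; case: c. Qed.

Lemma filter_nil_in (T : eqType) (P : pred T) (l : seq T) :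
  (forall x, x \in l -> ~~ P x) -> [seq x <- l | P x] = [::].
Proof.
move=> H; apply/eqP; rewrite -[_ == _]negbK -has_filter; apply/hasPn => x /H //.
Qed.

Lemma opn_closer c s p k : goodp s p -> k < size s -> closer c (nth Eps s k) ->
  [/\ opn c s p k = rcons (opn c s p k.+1) (p k), opener c (nth Eps s (p k))
    & nth Eps s (p k) = lab_inv (nth Eps s k)].
Proof.
move=> G hk hc; case: (G) => H1 H2 H3 H4 H5.
have [hne hneg] := closer_ne hc.
have [hjk hpj E] := good_neg G hk hne hneg.
have hop : opener c (nth Eps s (p k)).
  by rewrite E; move: hc; rewrite /opener /closer; case: (nth Eps s k); case: c.
split => //.
have hpk : p (p k) = k by apply: H2.
have hjs : p k < size s by apply: H1.
move: hjk hpk hjs hop; set j := p k => hjk hpk hjs hop.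
have Ek : iota 0 k = iota 0 j ++ j :: iota j.+1 (k - j.+1).
  by rewrite -{1}(subnKC hjk) iotaD add0n -addn1 iotaD -catA add0n addn1.
rewrite /opn -addn1 iotaD add0n filter_cat /= addn1.
rewrite (negbTE (closer_opener hc)).
rewrite cats0 Ek !filter_cat /= hop hpk leqnn ltnn /=.
have third : forall i, i \in iota j.+1 (k - j.+1) ->
    ~~ (opener c (nth Eps s i) && (k <= p i)).
  move=> i; rewrite mem_iota subnKC // => /andP[hji hik].
  apply/negP => /andP[hoi hki].
  have his : i < size s by apply: ltn_trans hk.
  have hne' : p i != k.
    apply/eqP => hpi; move: (H2 i his); rewrite hpi -/j => hh.
    by move: hji; rewrite hh ltnn.
  have hlt : k < p i by rewrite ltn_neqAle eq_sym hne' hki.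
  apply: (H5 j i hjs his (sim_open hop hoi) hji); by rewrite ?hpk.
rewrite (filter_nil_in third) (filter_nil_in (l := iota j.+1 (k - j.+1))); last first.
  move=> i hi; apply/negP => /andP[hoi hki]; move/negP: (third i hi); apply; rewrite hoi /=.
  exact: ltnW.
rewrite cats1; congr rcons; rewrite cats0.
apply: eq_in_filter => i; rewrite mem_iota add0n /= => hij.
case: (opener _ _) => //=.
rewrite [k <= p i]leq_eqVlt; case: eqP => //= hpi.
have his : i < size s by apply: ltn_trans hjs.
move: (H2 i his); rewrite -hpi -/j => hh.
by move: hij; rewrite hh ltnn.
Qed.
Lemma canonS c s k : canon c s k.+1 = upd c (canon c s k) k (nth Eps s k).
Proof. by []. Qed.
Lemma opn_canon c s p k : goodp s p -> k <= size s -> opn c s p k = canon c s k.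
Proof.
move=> G; elim: k => [|k IH] hk; first by rewrite /opn.
have hk' : k < size s by [].
rewrite canonS /upd -IH; last exact: ltnW.
case hc: (closer c (nth Eps s k)).
- have [E _ _] := opn_closer G hk' hc.
  by rewrite (negbTE (closer_opener hc)) E size_rcons /= -cats1 take_size_cat.
- by rewrite (opn_notcloser G hk' (negbT hc)).
Qed.

Lemma run_rcons l a : run (rcons l a) = obind (fun ws => step ws a) (run l).
Proof. by rewrite /run foldl_rcons. Qed.

Lemma pop_rcons w i : pop (rcons w i) i = Some w.
Proof.
rewrite /pop last_rcons eqxx size_rcons /= -cats1 take_size_cat //.
by case: w.
Qed.

Definition fidx s := fun i => idx (nth Eps s i).

Lemma good_run s p k : goodp s p -> k <= size s ->
  run (take k s) = Some (map (fidx s) (opn true s p k), map (fidx s) (opn false s p k)).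
Proof.
move=> G; elim: k => [|k IH] hk; first by rewrite take0.
have hk' : k < size s by [].
rewrite (take_nth Eps hk') run_rcons IH; last exact: ltnW.
rewrite [obind _ _]/=.
have nc : forall c, ~~ closer c (nth Eps s k) -> opn c s p k.+1 =
   if opener c (nth Eps s k) then rcons (opn c s p k) k else opn c s p k.
  by move=> c; apply: opn_notcloser.
have ft : fidx s k = idx (nth Eps s k) by [].
case E: (nth Eps s k) ft => [a|a|a|a|] ft.
- have n1 : ~~ closer true (nth Eps s k) by rewrite E.
  have n2 : ~~ closer false (nth Eps s k) by rewrite E.
  have o1 : opener true (nth Eps s k) by rewrite E.
  have o2 : opener false (nth Eps s k) = false by rewrite E.
  by rewrite (nc true n1) (nc false n2) o1 o2 map_rcons ft.
- have hc : closer true (nth Eps s k) by rewrite E.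
  have n2 : ~~ closer false (nth Eps s k) by rewrite E.
  have o2 : opener false (nth Eps s k) = false by rewrite E.
  have [E1 _ E2] := opn_closer G hk' hc.
  rewrite E1 (nc false n2) o2 map_rcons.
  have fp : fidx s (p k) = a by rewrite /fidx E2 E.
  by rewrite [step _ _]/= fp pop_rcons.
- have n1 : ~~ closer true (nth Eps s k) by rewrite E.
  have n2 : ~~ closer false (nth Eps s k) by rewrite E.
  have o1 : opener true (nth Eps s k) = false by rewrite E.
  have o2 : opener false (nth Eps s k) by rewrite E.
  by rewrite (nc true n1) (nc false n2) o1 o2 map_rcons ft.
- have hc : closer false (nth Eps s k) by rewrite E.
  have n1 : ~~ closer true (nth Eps s k) by rewrite E.
  have o1 : opener true (nth Eps s k) = false by rewrite E.
  have [E1 _ E2] := opn_closer G hk' hc.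
  rewrite E1 (nc true n1) o1 map_rcons.
  have fp : fidx s (p k) = a by rewrite /fidx E2 E.
  by rewrite [step _ _]/= fp pop_rcons.
- have n1 : ~~ closer true (nth Eps s k) by rewrite E.
  have n2 : ~~ closer false (nth Eps s k) by rewrite E.
  have o1 : opener true (nth Eps s k) = false by rewrite E.
  have o2 : opener false (nth Eps s k) = false by rewrite E.
  by rewrite (nc true n1) (nc false n2) o1 o2.
Qed.

Lemma good_balanced s p : goodp s p -> run s = Some ([::], [::]).
Proof.
move=> G; have := good_run G (leqnn (size s)); rewrite take_size => ->.
case: (G) => H1 _ _ _ _.
have Hn : forall c, opn c s p (size s) = [::].
  move=> c; apply: filter_nil_in => i; rewrite mem_iota add0n /= => hi.
  by apply/negP => /andP[_]; rewrite leqNgt H1.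
by rewrite !Hn.
Qed.

Lemma nonEps_closer a : a != Eps -> ~~ positive_lab a -> closer (isXlab a) a.
Proof. by case: a. Qed.
Lemma pos_opener a : positive_lab a -> opener (isXlab a) a.
Proof. by case: a. Qed.
Lemma opener_inv c a : opener c a -> closer c (lab_inv a).
Proof. by case: a; case: c. Qed.

Lemma good_unique s p1 p2 : goodp s p1 -> goodp s p2 ->
  forall i, i < size s -> p1 i = p2 i.
Proof.
have key : forall p c k, goodp s p -> k < size s -> closer c (nth Eps s k) ->
    p k = last 0 (canon c s k).
  move=> p c k G hk hc; have [E _ _] := opn_closer G hk hc.
  by rewrite -(opn_canon c G (ltnW hk)) E last_rcons.
move=> G1 G2 i hi.
case hE: (nth Eps s i == Eps).
  by rewrite (good_eps G1 hi (eqP hE)) (good_eps G2 hi (eqP hE)).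
case hp: (positive_lab (nth Eps s i)).
- have hlt := good_pos G1 hi hp.
  case: (G1) => H1 H2 _ H4 _.
  case: (G2) => _ H2' _ _ _.
  have [_ E] := H4 i hi hlt.
  have hc : closer (isXlab (nth Eps s i)) (nth Eps s (p1 i)).
    by rewrite E; apply: opener_inv; apply: pos_opener.
  have hk := H1 i hi.
  have e1 := key _ _ _ G1 hk hc; have e2 := key _ _ _ G2 hk hc.
  have h : p2 (p1 i) = i by rewrite e2 -e1 H2.
  by rewrite -{2}h H2'.
- have hc := nonEps_closer (negbT hE) (negbT hp).
  by rewrite (key _ _ _ G1 hi hc) (key _ _ _ G2 hi hc).
Qed.
Lemma run_none r : foldl (fun o a => obind (fun ws => step ws a) o) None r = None.
Proof. by elim: r. Qed.

Lemma run_take_some s k : run s != None -> run (take k s) != None.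
Proof.
rewrite -{1}(cat_take_drop k s) /run foldl_cat.
by case: (foldl _ _ (take k s)) => //; rewrite run_none.
Qed.

Lemma canon_open c s k i : i \in canon c s k -> i < k /\ opener c (nth Eps s i).
Proof.
elim: k => [|k IH] //; rewrite canonS /upd.
case: ifP => ho.
- rewrite mem_rcons in_cons => /orP[/eqP -> | /IH [h1 h2]]; first by rewrite ltnSn.
  by split => //; apply: ltnW.
- case: ifP => _.
  + by move/mem_take/IH => [h1 h2]; split => //; apply: ltnW.
  + by move/IH => [h1 h2]; split => //; apply: ltnW.
Qed.

Lemma sorted_rcons_lt (l : seq nat) y x : sorted ltn (rcons l y) -> x \in l -> x < y.
Proof.
elim: l => [|a l IH] //= hs; rewrite in_cons => /orP[/eqP ->|hx].
- move: hs; rewrite (path_sortedE ltn_trans) => /andP[/allP H _]; apply: H.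
  by rewrite mem_rcons mem_head.
- by apply: IH hx; move: hs; apply: path_sorted.
Qed.

Lemma canon_sorted c s k : sorted ltn (canon c s k).
Proof.
elim: k => [|k IH] //; rewrite canonS /upd.
case: ifP => _.
- case E: (canon c s k) IH => [|a l] //= hs.
  rewrite rcons_path hs /=.
  have : last a l \in canon c s k by rewrite E; apply: mem_last.
  by move/canon_open => [].
- by case: ifP => _ //; apply: take_sorted.
Qed.

Lemma last_in (l : seq nat) : l != [::] -> last 0 l \in l.
Proof. by case: l => // a l _; apply: mem_last. Qed.

Lemma canon_push c s i : opener c (nth Eps s i) -> i \in canon c s i.+1.
Proof. by move=> ho; rewrite canonS /upd ho mem_rcons mem_head. Qed.

Lemma canon_drop c s t x : x \in canon c s t -> x \notin canon c s t.+1 ->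
  closer c (nth Eps s t) /\ x = last 0 (canon c s t).
Proof.
rewrite canonS /upd => hx.
case: ifP => ho; first by rewrite mem_rcons in_cons hx orbT.
case: ifP => hc; last by rewrite hx.
move=> hn; split => //; move: hx hn; case/lastP: (canon c s t) => [|l y] //.
rewrite last_rcons mem_rcons in_cons size_rcons /= -cats1 take_size_cat //.
by case/orP => [/eqP -> // | ->].
Qed.

Lemma canon_notin c s t x : x < t -> x \notin canon c s t -> x \notin canon c s t.+1.
Proof.
rewrite canonS /upd => hxt hx.
case: ifP => _.
- by rewrite mem_rcons in_cons negb_or hx andbT neq_ltn hxt.
- case: ifP => _ //; apply: contra hx; apply: mem_take.
Qed.

Lemma canon_notin_le c s t u x : x < t -> t <= u -> x \notin canon c s t ->
  x \notin canon c s u.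
Proof.
move=> hxt; elim: u => [|u IH] htu hx.
- by move: htu; rewrite leqn0 => /eqP E; move: hxt; rewrite E.
- move: htu; rewrite leq_eqVlt => /orP[/eqP <- //| htu].
  apply: canon_notin; last exact: IH.
  exact: leq_trans hxt htu.
Qed.

Lemma transition (P : nat -> bool) a u : a <= u -> P a -> ~~ P u ->
  exists2 t, a <= t < u & P t && ~~ P t.+1.
Proof.
elim: u => [|u IH] hau hPa hPu.
- by move: hau; rewrite leqn0 => /eqP E; subst; rewrite hPa in hPu.
- case: (leqP a u) => h.
  + case hPu': (P u).
    * by exists u; [rewrite h ltnSn | rewrite hPu' hPu].
    * have [t h1 h2] := IH h hPa (negbT hPu'); exists t => //.
      by case/andP: h1 => -> /ltnW.
  + have E : a = u.+1 by apply/eqP; rewrite eqn_leq hau h.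
    by subst; rewrite hPa in hPu.
Qed.

Lemma canon_run s k : run s != None -> k <= size s ->
  run (take k s) = Some (map (fidx s) (canon true s k), map (fidx s) (canon false s k)).
Proof.
move=> hs; elim: k => [|k IH] hk; first by rewrite take0.
have hk' : k < size s by [].
have hn := run_take_some k.+1 hs.
move: hn; rewrite (take_nth Eps hk') run_rcons IH; last exact: ltnW.
rewrite [obind _ _]/= !canonS /upd.
case E: (nth Eps s k) => [a|a|a|a|] /=.
- by rewrite map_rcons /fidx E.
- by rewrite /pop; case: ifP => // _ _; rewrite size_map map_take.
- by rewrite map_rcons /fidx E.
- by rewrite /pop; case: ifP => // _ _; rewrite size_map map_take.
- by [].
Qed.
Lemma closer_canon c s k : run s != None -> k < size s -> closer c (nth Eps s k) ->
  canon c s k != [::] /\ nth Eps s (last 0 (canon c s k)) = lab_inv (nth Eps s k).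
Proof.
move=> hs hk hc.
have hn := run_take_some k.+1 hs.
move: hn; rewrite (take_nth Eps hk) run_rcons canon_run //; last exact: ltnW.
have hop : forall i, i \in canon c s k -> opener c (nth Eps s i) by move=> i /canon_open [].
case: c hc hop => hc hop /=.
- move: hc; case E: (nth Eps s k) => [a|a|a|a|] //= _.
  case/lastP: (canon true s k) hop => [|l y] hop //.
  rewrite map_rcons /pop last_rcons; case: ifP => // /andP[_ /eqP hy] _.
  split; first by rewrite -size_eq0 size_rcons.
  have hy' : y \in rcons l y by rewrite mem_rcons mem_head.
  by move: (hop y hy') hy; rewrite last_rcons /fidx; case: (nth Eps s y) => //= b _ ->.
- move: hc; case E: (nth Eps s k) => [a|a|a|a|] //= _.
  case/lastP: (canon false s k) hop => [|l y] hop //.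
  rewrite map_rcons /pop last_rcons; case: ifP => // /andP[_ /eqP hy] _.
  split; first by rewrite -size_eq0 size_rcons.
  have hy' : y \in rcons l y by rewrite mem_rcons mem_head.
  by move: (hop y hy') hy; rewrite last_rcons /fidx; case: (nth Eps s y) => //= b _ ->.
Qed.

Lemma canon_end c s : run s = Some ([::], [::]) -> canon c s (size s) = [::].
Proof.
move=> hs.
have hs' : run s != None by rewrite hs.
have := canon_run hs' (leqnn _); rewrite take_size hs => -[E1 E2].
by case: c; [case: (canon true s _) E1 | case: (canon false s _) E2].
Qed.

Definition Q c s t i := closer c (nth Eps s t) && (last 0 (canon c s t) == i).

Lemma E1 c s i : run s = Some ([::], [::]) -> i < size s -> opener c (nth Eps s i) ->
  exists2 t, i < t < size s & Q c s t i.
Proof.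
move=> hs hi ho.
have hin := canon_push ho.
have hout : i \notin canon c s (size s) by rewrite canon_end.
have [t /andP[h1 h2] /andP[ht1 ht2]] :=
  transition (P := fun u => i \in canon c s u) hi hin hout.
have [hc hl] := canon_drop ht1 ht2.
by exists t; [rewrite h1 h2 | rewrite /Q hc -hl eqxx].
Qed.

Lemma E2 c s t t' i : run s = Some ([::], [::]) -> t < size s -> t' < size s ->
  Q c s t i -> Q c s t' i -> t = t'.
Proof.
move=> hs.
have hs' : run s != None by rewrite hs.
suff asym : forall t t', t < t' -> t < size s -> t' < size s ->
    Q c s t i -> Q c s t' i -> False.
  move=> ht ht' hq hq'; case: (ltngtP t t') => // h.
  - by case: (asym t t').
  - by case: (asym t' t).
move=> {}t {}t' htt' ht ht' /andP[hc /eqP hl] /andP[hc' /eqP hl'].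
have [ne _] := closer_canon hs' ht hc.
have [ne' _] := closer_canon hs' ht' hc'.
have hin : i \in canon c s t by rewrite -hl last_in.
have hin' : i \in canon c s t' by rewrite -hl' last_in.
have [hit _] := canon_open hin.
have hout : i \notin canon c s t.+1.
  have := canon_sorted c s t.
  rewrite canonS /upd (negbTE (closer_opener hc)) hc.
  move: hl hin; case/lastP: (canon c s t) => [|l y] //.
  rewrite last_rcons => -> _ hsrt.
  rewrite size_rcons /= -cats1 take_size_cat //.
  apply/negP => /(sorted_rcons_lt hsrt); by rewrite ltnn.
by move: (canon_notin_le (t:=t.+1) (ltnW hit) htt' hout); rewrite hin'.
Qed.
Lemma E3 c s j t' u : run s = Some ([::], [::]) -> j < size s -> t' < size s ->
  opener c (nth Eps s j) -> Q c s t' j -> j < u -> u <= t' -> j \in canon c s u.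
Proof.
move=> hs hj ht' ho hq hju hut.
apply/negPn/negP => hu.
have hin := canon_push ho.
have [t0 /andP[h1 h2] /andP[ht1 ht2]] :=
  transition (P := fun u => j \in canon c s u) hju hin hu.
have [hc hl] := canon_drop ht1 ht2.
have ht0 : t0 < size s by apply: ltn_trans h2 (leq_ltn_trans hut ht').
have := E2 hs ht0 ht' (introT andP (conj hc (introT eqP (esym hl)))) hq.
by move=> E; move: h2; rewrite E ltnNge hut.
Qed.

Definition pe s k :=
  if k < size s then
    let a := nth Eps s k in let c := isXlab a in
    if opener c a then head k [seq t <- iota k.+1 (size s - k.+1) | Q c s t k]
    else if closer c a then last 0 (canon c s k) else k
  else k.

Lemma opener_kind c a : opener c a -> isXlab a = c.
Proof. by case: a; case: c. Qed.
Lemma closer_kind c a : closer c a -> isXlab a = c.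
Proof. by case: a; case: c. Qed.

Lemma pe_open c s i : run s = Some ([::], [::]) -> i < size s -> opener c (nth Eps s i) ->
  [/\ i < pe s i, pe s i < size s & Q c s (pe s i) i].
Proof.
move=> hs hi ho.
rewrite /pe hi /= (opener_kind ho) ho.
have [t ht hq] := E1 hs hi ho.
have tin : t \in [seq t <- iota i.+1 (size s - i.+1) | Q c s t i].
  by rewrite mem_filter hq mem_iota subnKC.
case EL: [seq t <- iota i.+1 (size s - i.+1) | Q c s t i] tin => [|h L'] // _ /=.
have := mem_head h L'; rewrite -EL mem_filter mem_iota subnKC //.
by case/andP => -> /andP[-> ->].
Qed.

Lemma pe_close c s k : run s = Some ([::], [::]) -> k < size s -> closer c (nth Eps s k) ->
  [/\ pe s k = last 0 (canon c s k), last 0 (canon c s k) < k,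
      opener c (nth Eps s (last 0 (canon c s k))),
      nth Eps s (last 0 (canon c s k)) = lab_inv (nth Eps s k) &
      Q c s k (last 0 (canon c s k))].
Proof.
move=> hs hk hc.
have hs' : run s != None by rewrite hs.
have [ne E] := closer_canon hs' hk hc.
have [h1 h2] := canon_open (last_in ne).
split => //.
- by rewrite /pe hk /= (closer_kind hc) (negbTE (closer_opener hc)) hc.
- by rewrite /Q hc eqxx.
Qed.

Lemma pe_eps s k : nth Eps s k = Eps -> pe s k = k.
Proof. by move=> E; rewrite /pe E /=; case: ifP. Qed.

Lemma classify a : a = Eps \/ opener (isXlab a) a \/ closer (isXlab a) a.
Proof. by case: a; auto. Qed.

Lemma opener_pos c a : opener c a -> positive_lab a.
Proof. by case/andP. Qed.

Lemma sim_kind c c' a b : opener c a -> opener c' b -> sim a b -> c = c'.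
Proof. by case: a; case: b; case: c; case: c'. Qed.

Lemma pe_good s : run s = Some ([::], [::]) -> goodp s (pe s).
Proof.
move=> hs.
have Hfwd : forall i, i < size s -> i < pe s i ->
    opener (isXlab (nth Eps s i)) (nth Eps s i).
  move=> i hi hlt.
  case: (classify (nth Eps s i)) => [E|[//|hc]].
  - by move: hlt; rewrite pe_eps // ltnn.
  - have [E _ _ _ _] := pe_close hs hi hc.
    have [_ h _ _ _] := pe_close hs hi hc.
    by move: hlt; rewrite E ltnNge ltnW.
split.
- move=> i hi; case: (classify (nth Eps s i)) => [E|[ho|hc]].
  + by rewrite pe_eps.
  + by have [] := pe_open hs hi ho.
  + have [E h _ _ _] := pe_close hs hi hc.
    by rewrite E; apply: ltn_trans hi.
- move=> i hi; case: (classify (nth Eps s i)) => [E|[ho|hc]].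
  + by rewrite !pe_eps.
  + have [h1 h2 /andP[hc /eqP hl]] := pe_open hs hi ho.
    have [E _ _ _ _] := pe_close hs h2 hc.
    by rewrite E.
  + have [E h ho _ hq] := pe_close hs hi hc.
    have hi' : last 0 (canon (isXlab (nth Eps s i)) s i) < size s by apply: ltn_trans hi.
    have [h1 h2 hq'] := pe_open hs hi' ho.
    rewrite E; symmetry; exact: E2 hs hi h2 hq hq'.
- move=> i hi hpi; case: (classify (nth Eps s i)) => [//|[ho|hc]].
  + have [h1 _ _] := pe_open hs hi ho.
    by move: h1; rewrite hpi ltnn.
  + have [E h _ _ _] := pe_close hs hi hc.
    by move: h; rewrite -E hpi ltnn.
- move=> i hi hlt.
  have ho := Hfwd i hi hlt.
  split; first exact: opener_pos ho.
  have [h1 h2 /andP[hc /eqP hl]] := pe_open hs hi ho.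
  have [_ _ _ E _] := pe_close hs h2 hc.
  by rewrite hl in E; rewrite E lab_invK.
- move=> i j hi hj hsim hij hjp hpp.
  have hip : i < pe s i by apply: ltn_trans hij hjp.
  have hjp' : j < pe s j by apply: ltn_trans hjp hpp.
  have hoi := Hfwd i hi hip; have hoj := Hfwd j hj hjp'.
  have ek := sim_kind hoi hoj hsim.
  rewrite -ek in hoj.
  have [_ h2 hq] := pe_open hs hi hoi.
  have [_ h2' hq'] := pe_open hs hj hoj.
  have hin := E3 hs hj h2' hoj hq' hjp (ltnW hpp).
  move: hq => /andP[hc /eqP hl].
  have hs' : run s != None by rewrite hs.
  have := canon_sorted (isXlab (nth Eps s i)) s (pe s i).
  move: hin hl; case/lastP: (canon _ s (pe s i)) => [|l y] //.
  rewrite last_rcons mem_rcons in_cons => + E; rewrite E.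
  case/orP => [/eqP ej | hjl hsrt].
  + by move: hij; rewrite ej ltnn.
  + by have := sorted_rcons_lt hsrt hjl; rewrite ltnNge ltnW.
Qed.
Lemma nth_seq m n (rho : 'I_m -> label) (gamma : 'I_n -> 'I_m) (t : 'I_n) :
  nth Eps [seq rho (gamma t) | t <- enum 'I_n] t = rho (gamma t).
Proof. by rewrite (nth_map t) ?size_enum_ord // nth_ord_enum. Qed.

Definition pn n (pi : {perm 'I_n}) (i : nat) : nat :=
  match (insub i : option 'I_n) with Some t => val (pi t) | None => i end.

Lemma pnE n (pi : {perm 'I_n}) (t : 'I_n) : pn pi t = pi t.
Proof. by rewrite /pn valK. Qed.

Lemma perm_good m n (rho : 'I_m -> label) (gamma : 'I_n -> 'I_m) (pi : {perm 'I_n}) :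
  good_involution rho gamma pi -> goodp [seq rho (gamma t) | t <- enum 'I_n] (pn pi).
Proof.
case=> H1 H2 H3 H4.
have Hsz : size [seq rho (gamma t) | t <- enum 'I_n] = n by rewrite size_map size_enum_ord.
split; rewrite Hsz.
- move=> i hi; pose t := Ordinal hi; have -> : i = t by [].
  by rewrite pnE ltn_ord.
- move=> i hi; pose t := Ordinal hi; have -> : i = t by [].
  by rewrite !pnE H1.
- move=> i hi; pose t := Ordinal hi; have -> : i = t by [].
  rewrite pnE nth_seq => E; apply: H2; exact: val_inj.
- move=> i hi; pose t := Ordinal hi; have -> : i = t by [].
  by rewrite pnE !nth_seq; apply: H3.
- move=> i j hi hj; pose t := Ordinal hi; have -> : i = t by [].
  pose u := Ordinal hj; have -> : j = u by [].
  rewrite !pnE !nth_seq => hsim h1 h2 h3; apply: H4.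
  by exists t, u; split.
Qed.

Lemma good_perm m n (rho : 'I_m -> label) (gamma : 'I_n -> 'I_m) (p : nat -> nat) :
  goodp [seq rho (gamma t) | t <- enum 'I_n] p ->
  exists pi : {perm 'I_n}, good_involution rho gamma pi.
Proof.
have Hsz : size [seq rho (gamma t) | t <- enum 'I_n] = n by rewrite size_map size_enum_ord.
case; rewrite Hsz => H1 H2 H3 H4 H5.
pose f := fun t : 'I_n => Ordinal (H1 t (ltn_ord t)).
have finj : injective f.
  move=> x y /(congr1 val) /= E; apply: ord_inj.
  by rewrite -(H2 x (ltn_ord x)) E H2.
exists (perm finj); split.
- by move=> i; apply: val_inj; rewrite !permE /= H2.
- move=> i /(congr1 val); rewrite permE /= => E.
  by rewrite -nth_seq; apply: H3.
- move=> i; rewrite permE /= => h.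
  by have := H4 i (ltn_ord i) h; rewrite !nth_seq (nth_seq rho gamma (f i)).
- case=> i [j [hsim [h1 h2 h3]]].
  move: h2 h3; rewrite !permE /= => h2 h3.
  apply: (H5 i j (ltn_ord i) (ltn_ord j)) => //.
  by rewrite !nth_seq.
Qed.

Theorem proposition2p2 (m : nat) (edge : rel 'I_m) (rho : 'I_m -> label)
    (n : nat) (gamma : 'I_n -> 'I_m) :
  two_stack_automaton edge rho -> is_path edge gamma ->
  (balanced rho gamma <-> exists pi : {perm 'I_n}, good_involution rho gamma pi) /\
  (balanced rho gamma -> forall pi1 pi2 : {perm 'I_n},
     good_involution rho gamma pi1 -> good_involution rho gamma pi2 -> pi1 = pi2).
Proof.
move=> _ _.
rewrite /balanced.
split; first split.
- move/eqP => hs; exact: good_perm (pe_good hs).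
- by case=> pi G; apply/eqP; apply: good_balanced (perm_good G).
- move=> _ pi1 pi2 G1 G2; apply/permP => t; apply: ord_inj; rewrite -!pnE.
  apply: good_unique (perm_good G1) (perm_good G2) _ _.
  by rewrite size_map size_enum_ord.
Qed.
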